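(* Let $\{\lambda_k\}_{k\ge 0}$ be a sequence of positive scalars and, for each $k$, let $x_{\lambda_k}^*$ denote the unique minimizer of $f+\lambda_k h$ over $X$. Then: (a) for all $k\ge 1$, $\displaystyle \|x_{\lambda_k}^*-x_{\lambda_{k-1}}^*\|\le \frac{C_h}{\mu_h}\left|1-\frac{\lambda_{k-1}}{\lambda_k}\right|$; (b) if $\lambda_k\to 0$, then $x_{\lambda_k}^*\to x_h^*$.
   Context: Standing setup: $X\subset\mathbb{R}^n$ is nonempty, compact and convex. $f_1,\dots,f_m:\mathbb{R}^n\to\mathbb{R}$ are convex (possibly nondifferentiable) functions and $f=\sum_{i=1}^m f_i$. $h:\mathbb{R}^n\to\mathbb{R}$ is strongly convex with parameter $\mu_h>0$ (possibly nondifferentiable), i.e. $h(y)\ge h(x)+g^T(y-x)+\frac{\mu_h}{2}\|y-x\|^2$ for all $x,y$ and all $g\in\partial h(x)$. Let $f^*=\min_{x\in X}f(x)$, $X^*=\arg\min_{x\in X}f(x)$, and let $x_h^*$ be the unique minimizer of $h$ over $X^*$ (the bilevel problem: minimize $h(x)$ subject to $x\in X^*$). For $\lambda>0$, $x_\lambda^*$ denotes the unique minimizer of $f+\lambda h$ over $X$. $C_f,C_h$ are constants such that $\|g\|\le C_f$ for every $g\in\partial f_i(x)$, $i=1,\dots,m$, $x\in X$, and $\|g\|\le C_h$ for every $g\in\partial h(x)$, $x\in X$. $\|\cdot\|$ is the Euclidean norm. *)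

(* Defs.v *)
(* classical reals. Points of R^n are represented as
   functions nat -> R vanishing at every index >= n (predicate inRn). *)
From Stdlib Require Import Reals Lra.
Open Scope R_scope.

Definition vec := nat -> R.

Definition inRn (n : nat) (x : vec) : Prop := forall i, (n <= i)%nat -> x i = 0.

Fixpoint sumR (n : nat) (F : nat -> R) : R :=
  match n with
  | O => 0
  | S k => sumR k F + F k
  end.

Definition vadd (x y : vec) : vec := fun i => x i + y i.
Definition vsub (x y : vec) : vec := fun i => x i - y i.
Definition vscal (a : R) (x : vec) : vec := fun i => a * x i.

Definition dot (n : nat) (x y : vec) : R := sumR n (fun i => x i * y i).
Definition norm (n : nat) (x : vec) : R := sqrt (dot n x x).

Definition convex_set (n : nat) (X : vec -> Prop) : Prop :=
  forall x y t, X x -> X y -> 0 <= t <= 1 ->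
    X (vadd (vscal t x) (vscal (1 - t) y)).

(* sequential compactness of a subset of R^n (equivalent to compactness
   in the metric space R^n) *)
Definition seq_compact (n : nat) (X : vec -> Prop) : Prop :=
  forall u : nat -> vec, (forall k, X (u k)) ->
    exists (phi : nat -> nat) (l : vec),
      (forall k, (phi k < phi (S k))%nat) /\ X l /\
      Un_cv (fun k => norm n (vsub (u (phi k)) l)) 0.

Definition convex_fun (n : nat) (F : vec -> R) : Prop :=
  forall x y t, inRn n x -> inRn n y -> 0 <= t <= 1 ->
    F (vadd (vscal t x) (vscal (1 - t) y)) <= t * F x + (1 - t) * F y.

Definition subgrad (n : nat) (F : vec -> R) (x g : vec) : Prop :=
  inRn n g /\ forall y, inRn n y -> F y >= F x + dot n g (vsub y x).

Definition strongly_convex (n : nat) (F : vec -> R) (mu : R) : Prop :=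
  convex_fun n F /\
  forall x y g, inRn n x -> inRn n y -> subgrad n F x g ->
    F y >= F x + dot n g (vsub y x) + mu / 2 * (norm n (vsub y x)) ^ 2.

Definition is_min_on (F : vec -> R) (S : vec -> Prop) (x : vec) : Prop :=
  S x /\ forall y, S y -> F x <= F y.

Definition argmin_set (F : vec -> R) (S : vec -> Prop) : vec -> Prop :=
  fun x => is_min_on F S x.

Definition sumfun (m : nat) (fs : nat -> vec -> R) : vec -> R :=
  fun x => sumR m (fun i => fs i x).

(* Main.v *)
Require Import Defs.
From Stdlib Require Import Reals Lra Lia Psatz FunctionalExtensionality ClassicalEpsilon Classical.
Open Scope R_scope.

Lemma sumR_ext n F G : (forall i, (i < n)%nat -> F i = G i) -> sumR n F = sumR n G.
Proof.
  induction n; simpl; intros H; [reflexivity|].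
  rewrite IHn by (intros; apply H; lia). rewrite H by lia. reflexivity.
Qed.

Lemma sumR_add n F G : sumR n (fun i => F i + G i) = sumR n F + sumR n G.
Proof. induction n; simpl; [ring|]. rewrite IHn; ring. Qed.

Lemma sumR_scal n c F : sumR n (fun i => c * F i) = c * sumR n F.
Proof. induction n; simpl; [ring|]. rewrite IHn; ring. Qed.

Lemma sumR_nonneg n F : (forall i, (i < n)%nat -> 0 <= F i) -> 0 <= sumR n F.
Proof.
  induction n; simpl; intros H; [lra|].
  assert (0 <= sumR n F) by (apply IHn; intros; apply H; lia).
  assert (0 <= F n) by (apply H; lia). lra.
Qed.

Ltac lin := unfold dot; rewrite <- ?sumR_scal, <- ?sumR_add; apply sumR_ext;
  intros; cbv beta; unfold vsub, vadd, vscal; ring.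

Lemma dot_sym n x y : dot n x y = dot n y x.
Proof. lin. Qed.

Lemma dot_nonneg n x : 0 <= dot n x x.
Proof. unfold dot. apply sumR_nonneg. intros. nra. Qed.

Lemma dot_ext n x x' y y' : (forall i, (i < n)%nat -> x i = x' i) ->
  (forall i, (i < n)%nat -> y i = y' i) -> dot n x y = dot n x' y'.
Proof. intros H1 H2. unfold dot. apply sumR_ext. intros. rewrite H1, H2 by lia. auto. Qed.

Lemma dot_zero_comp n x : dot n x x = 0 -> forall i, (i < n)%nat -> x i = 0.
Proof.
  induction n; intros H i Hi; [lia|].
  unfold dot in H; simpl in H.
  assert (0 <= sumR n (fun i => x i * x i)) by (apply (dot_nonneg n x)).
  assert (x n * x n = 0) by nra.
  assert (sumR n (fun i => x i * x i) = 0) by nra.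
  destruct (Nat.eq_dec i n). subst. nra. apply IHn; auto. lia.
Qed.

Lemma norm_nonneg n x : 0 <= norm n x.
Proof. unfold norm. apply sqrt_pos. Qed.

Lemma norm_sq n x : norm n x * norm n x = dot n x x.
Proof. unfold norm. apply sqrt_sqrt. apply dot_nonneg. Qed.

Lemma norm_scal n a x : norm n (vscal a x) = Rabs a * norm n x.
Proof.
  unfold norm. replace (dot n (vscal a x) (vscal a x)) with (Rsqr a * dot n x x) by (unfold Rsqr; lin).
  rewrite sqrt_mult. rewrite sqrt_Rsqr_abs. auto. apply Rle_0_sqr. apply dot_nonneg.
Qed.

Lemma norm_sub_sym n x y : norm n (vsub x y) = norm n (vsub y x).
Proof. unfold norm. f_equal. lin. Qed.

Lemma CS n x y : Rabs (dot n x y) <= norm n x * norm n y.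
Proof.
  set (A := dot n y y). set (B := dot n x y). set (C := dot n x x).
  assert (Hq : forall s, 0 <= C + (-2*s)*B + (s*s)*A).
  { intro s. replace (C + (-2*s)*B + (s*s)*A) with (dot n (vsub x (vscal s y)) (vsub x (vscal s y)))
      by (unfold A, B, C; lin). apply dot_nonneg. }
  assert (HA: 0 <= A) by apply dot_nonneg. assert (HC : 0 <= C) by apply dot_nonneg.
  assert (Hb : B*B <= C*A).
  { destruct (Req_dec A 0) as [H0|H0].
    - assert (B = 0).
      { destruct (Req_dec B 0) as [|HB]; auto. specialize (Hq ((C+1)/(2*B))).
        replace (C + -2 * ((C + 1) / (2 * B)) * B + (C + 1) / (2 * B) * ((C + 1) / (2 * B)) * A) with (-1) in Hq
          by (rewrite H0; field; auto). lra. }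
      subst; nra.
    - specialize (Hq (B/A)).
      replace (C + -2 * (B / A) * B + B / A * (B / A) * A) with ((C*A - B*B)/A) in Hq by (field; auto).
      assert (0 <= (C*A-B*B)/A * A) by (apply Rmult_le_pos; lra).
      replace ((C*A - B*B)/A*A) with (C*A-B*B) in H by (field; auto). lra. }
  rewrite <- sqrt_Rsqr_abs. unfold norm. fold A C. rewrite <- sqrt_mult by auto.
  apply sqrt_le_1_alt. unfold Rsqr. lra.
Qed.

Lemma inRn_add n x y : inRn n x -> inRn n y -> inRn n (vadd x y).
Proof. unfold inRn, vadd; intros H1 H2 i Hi; rewrite H1, H2 by auto; ring. Qed.
Lemma inRn_sub n x y : inRn n x -> inRn n y -> inRn n (vsub x y).
Proof. unfold inRn, vsub; intros H1 H2 i Hi; rewrite H1, H2 by auto; ring. Qed.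
Lemma inRn_scal n a x : inRn n x -> inRn n (vscal a x).
Proof. unfold inRn, vscal; intros H1 i Hi; rewrite H1 by auto; ring. Qed.
Lemma inRn_mono k n x : (k <= n)%nat -> inRn k x -> inRn n x.
Proof. unfold inRn; intros; apply H0; lia. Qed.

Lemma div_le s t a b : 0 < s -> 0 < t -> t*a <= s*b -> a/s <= b/t.
Proof.
  intros Hs Ht H. replace (a/s) with ((t*a) * /(s*t)) by (field; lra).
  replace (b/t) with ((s*b) * /(s*t)) by (field; lra).
  apply Rmult_le_compat_r; auto. left; apply Rinv_0_lt_compat; nra.
Qed.

Definition ek (k : nat) : vec := fun i => if Nat.eqb i k then 1 else 0.
Definition trunc (k:nat) (u:vec) : vec := fun i => if Nat.ltb i k then u i else 0.
Definition zv : vec := fun _ => 0.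

Lemma HB n (p : vec -> R) : convex_fun n p -> p zv = 0 ->
  forall k, (k <= n)%nat -> exists g, inRn k g /\ forall u, inRn k u -> dot k g u <= p u.
Proof.
  intros Hp Hp0. induction k as [|k IH]; intros Hkn.
  - exists zv. split. intros i _; reflexivity.
    intros u Hu. replace u with zv. rewrite Hp0. unfold dot; simpl; lra.
    apply functional_extensionality; intro i. symmetry. apply Hu. lia.
  - destruct (IH ltac:(lia)) as [g [Hg Hle]].
    set (e := ek k).
    assert (He : inRn (S k) e).
    { intros i Hi. unfold e, ek. destruct (Nat.eqb_spec i k); [lia|auto]. }
    assert (Hin : forall x, inRn (S k) x -> inRn n x) by (intros; eapply inRn_mono; [|eauto]; lia).
    assert (Hin' : forall x, inRn k x -> inRn (S k) x) by (intros; eapply inRn_mono; [|eauto]; lia).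
    assert (Key : forall u v s t, inRn k u -> inRn k v -> 0 < s -> 0 < t ->
       t * (dot k g u - p (vsub u (vscal s e))) <= s * (p (vadd v (vscal t e)) - dot k g v)).
    { intros u v s t Hu Hv Hs Ht.
      set (w := vadd (vscal (t/(s+t)) u) (vscal (s/(s+t)) v)).
      assert (Hw : inRn k w) by (apply inRn_add; apply inRn_scal; auto).
      assert (H1 := Hle w Hw).
      replace (dot k g w) with (t/(s+t) * dot k g u + s/(s+t) * dot k g v) in H1 by (unfold w; lin).
      assert (Ew : w = vadd (vscal (t/(s+t)) (vsub u (vscal s e))) (vscal (1 - t/(s+t)) (vadd v (vscal t e)))).
      { apply functional_extensionality; intro i. unfold w, vadd, vscal, vsub. field. lra. }
      assert (H2 := Hp (vsub u (vscal s e)) (vadd v (vscal t e)) (t/(s+t))).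
      rewrite <- Ew in H2.
      assert (H3 : 0 <= t/(s+t) <= 1).
      { split. apply Rlt_le, Rdiv_lt_0_compat; lra.
        apply Rmult_le_reg_r with (s+t). lra. field_simplify; lra. }
      specialize (H2 (Hin _ (inRn_sub _ _ _ (Hin' _ Hu) (inRn_scal _ _ _ He)))
                     (Hin _ (inRn_add _ _ _ (Hin' _ Hv) (inRn_scal _ _ _ He))) H3).
      replace (1 - t/(s+t)) with (s/(s+t)) in H2 by (field; lra).
      set (p1 := p (vsub u (vscal s e))) in *. set (p2 := p (vadd v (vscal t e))) in *.
      set (Lu := dot k g u) in *. set (Lv := dot k g v) in *.
      assert (H4 : (t * Lu + s * Lv) * /(s+t) <= (t*p1 + s*p2) * /(s+t)).
      { replace ((t * Lu + s * Lv) * /(s+t)) with (t / (s + t) * Lu + s / (s + t) * Lv) by (field; lra).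
        replace ((t*p1 + s*p2) * /(s+t)) with (t / (s + t) * p1 + s / (s + t) * p2) by (field; lra).
        lra. }
      apply Rmult_le_reg_r in H4. lra. apply Rinv_0_lt_compat. lra. }
    set (A := fun r => exists u s, inRn k u /\ 0 < s /\ r = (dot k g u - p (vsub u (vscal s e)))/s).
    assert (UB : forall v t, inRn k v -> 0 < t -> is_upper_bound A ((p (vadd v (vscal t e)) - dot k g v)/t)).
    { intros v t Hv Ht r [u [s [Hu [Hs ->]]]]. apply div_le; auto. }
    assert (Hz : inRn k zv) by (intros i _; reflexivity).
    destruct (completeness A) as [c [Hc1 Hc2]].
    { eexists. apply (UB zv 1 Hz). lra. }
    { exists ((dot k g zv - p (vsub zv (vscal 1 e)))/1). exists zv, 1. repeat split; auto; lra. }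
    exists (vadd g (vscal c e)). split.
    { apply inRn_add. apply Hin'; auto. apply inRn_scal; auto. }
    intros u Hu.
    set (u' := trunc k u).
    assert (Hu' : inRn k u').
    { intros i Hi. unfold u', trunc. destruct (Nat.ltb_spec i k); [lia|auto]. }
    assert (Edot : dot (S k) (vadd g (vscal c e)) u = dot k g u' + c * u k).
    { unfold dot. simpl. f_equal.
      - apply sumR_ext. intros i Hi. unfold vadd, vscal, e, ek, u', trunc.
        destruct (Nat.eqb_spec i k); [lia|]. destruct (Nat.ltb_spec i k); [|lia]. ring.
      - unfold vadd, vscal, e, ek. rewrite Nat.eqb_refl. rewrite (Hg k) by lia. ring. }
    assert (Eu : u = vadd u' (vscal (u k) e)).
    { apply functional_extensionality; intro i. unfold vadd, vscal, u', trunc, e, ek.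
      destruct (Nat.ltb_spec i k); destruct (Nat.eqb_spec i k); try lia.
      ring. subst; ring. rewrite Hu by lia. ring. }
    rewrite Edot.
    destruct (Rtotal_order (u k) 0) as [Hneg|[Hz0|Hpos]].
    + set (s := - u k).
      assert (Eu2 : u = vsub u' (vscal s e)).
      { rewrite Eu at 1. apply functional_extensionality; intro i. unfold vadd, vsub, vscal, s. ring. }
      assert (Hr : A ((dot k g u' - p (vsub u' (vscal s e)))/s)).
      { exists u', s. repeat split; auto. unfold s; lra. }
      specialize (Hc1 _ Hr). rewrite <- Eu2 in Hc1.
      assert (0 < s) by (unfold s; lra).
      apply Rmult_le_compat_r with (r := s) in Hc1; [|lra].
      replace ((dot k g u' - p u) / s * s) with (dot k g u' - p u) in Hc1 by (field; lra).
      unfold s in Hc1. lra.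
    + assert (Eu3 : u = u'). { rewrite Eu at 1. rewrite Hz0. apply functional_extensionality; intro i. unfold vadd, vscal. ring. }
      rewrite Hz0, Rmult_0_r, Rplus_0_r. rewrite Eu3. apply Hle; auto.
    + specialize (Hc2 _ (UB u' (u k) Hu' Hpos)). rewrite <- Eu in Hc2.
      apply Rmult_le_compat_r with (r := u k) in Hc2; [|lra].
      replace ((p u - dot k g u') / u k * u k) with (p u - dot k g u') in Hc2 by (field; lra).
      lra.
Qed.

Lemma subgrad_exists n F x : convex_fun n F -> inRn n x -> exists g, subgrad n F x g.
Proof.
  intros HF Hx.
  set (p := fun d => F (vadd x d) - F x).
  assert (Hp : convex_fun n p).
  { intros d1 d2 t H1 H2 Ht. unfold p.
    replace (vadd x (vadd (vscal t d1) (vscal (1 - t) d2))) with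
      (vadd (vscal t (vadd x d1)) (vscal (1-t) (vadd x d2))).
    2:{ apply functional_extensionality; intro i; unfold vadd, vscal; ring. }
    assert (HH := HF (vadd x d1) (vadd x d2) t (inRn_add _ _ _ Hx H1) (inRn_add _ _ _ Hx H2) Ht).
    lra. }
  assert (Hp0 : p zv = 0).
  { unfold p. replace (vadd x zv) with x. ring. apply functional_extensionality; intro i; unfold vadd, zv; ring. }
  destruct (HB n p Hp Hp0 n (le_n n)) as [g [Hg Hle]].
  exists g. split; auto. intros y Hy.
  specialize (Hle (vsub y x) (inRn_sub _ _ _ Hy Hx)). unfold p in Hle.
  replace (vadd x (vsub y x)) with y in Hle. lra.
  apply functional_extensionality; intro i; unfold vadd, vsub; ring.
Qed.

Lemma norm_pow2 n v : norm n v ^ 2 = dot n v v.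
Proof. rewrite <- norm_sq. ring. Qed.

Lemma seg_sc n h mu x y t : strongly_convex n h mu -> inRn n x -> inRn n y -> 0 <= t <= 1 ->
  h (vadd (vscal t x) (vscal (1-t) y)) <= t * h x + (1-t) * h y - mu/2 * (t*(1-t)) * dot n (vsub x y) (vsub x y).
Proof.
  intros [Hc Hs] Hx Hy Ht. set (z := vadd (vscal t x) (vscal (1-t) y)).
  assert (Hz : inRn n z) by (apply inRn_add; apply inRn_scal; auto).
  destruct (subgrad_exists n h z Hc Hz) as [g Hg].
  assert (H1 := Hs z x g Hz Hx Hg). assert (H2 := Hs z y g Hz Hy Hg).
  rewrite norm_pow2 in H1, H2.
  replace (dot n g (vsub x z)) with ((1-t) * dot n g (vsub x y)) in H1 by (unfold z; lin).
  replace (dot n g (vsub y z)) with (-t * dot n g (vsub x y)) in H2 by (unfold z; lin).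
  replace (dot n (vsub x z) (vsub x z)) with ((1-t)*(1-t) * dot n (vsub x y) (vsub x y)) in H1 by (unfold z; lin).
  replace (dot n (vsub y z) (vsub y z)) with (t*t * dot n (vsub x y) (vsub x y)) in H2 by (unfold z; lin).
  set (G := dot n g (vsub x y)) in *. set (D := dot n (vsub x y) (vsub x y)) in *.
  set (hz := h z) in *.
  assert (E1 : t * h x >= t * (hz + (1 - t) * G + mu / 2 * ((1 - t) * (1 - t) * D))).
  { apply Rle_ge, Rmult_le_compat_l; lra. }
  assert (E2 : (1-t) * h y >= (1-t) * (hz + - t * G + mu / 2 * (t * t * D))).
  { apply Rle_ge, Rmult_le_compat_l; lra. }
  nra.
Qed.

Lemma sumfun_convex n m fs : (forall i, (i<m)%nat -> convex_fun n (fs i)) -> convex_fun n (sumfun m fs).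
Proof.
  induction m; intros H x y t Hx Hy Ht; unfold sumfun; simpl. lra.
  assert (IH := IHm (fun i Hi => H i ltac:(lia)) x y t Hx Hy Ht). unfold sumfun in IH.
  assert (H' := H m (le_n _) x y t Hx Hy Ht). lra.
Qed.

Lemma neg_abs a : - Rabs a <= a.
Proof. pose proof (Rle_abs (-a)). rewrite Rabs_Ropp in H. lra. Qed.

Lemma lsc n F x : convex_fun n F -> inRn n x ->
  exists G, 0 <= G /\ forall y, inRn n y -> F x <= F y + G * norm n (vsub y x).
Proof.
  intros HF Hx. destruct (subgrad_exists n F x HF Hx) as [g [Hg Hs]].
  exists (norm n g). split. apply norm_nonneg. intros y Hy.
  specialize (Hs y Hy). pose proof (CS n g (vsub y x)). pose proof (neg_abs (dot n g (vsub y x))). lra.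
Qed.

Lemma lip n F C S x y : convex_fun n F -> (forall x g, S x -> subgrad n F x g -> norm n g <= C) ->
  (forall x, S x -> inRn n x) -> S x -> S y -> F y - F x <= C * norm n (vsub y x).
Proof.
  intros HF HC HS Sx Sy. destruct (subgrad_exists n F y HF (HS y Sy)) as [g Hg].
  pose proof (HC y g Sy Hg). destruct Hg as [Hg Hs].
  specialize (Hs x (HS x Sx)). pose proof (CS n g (vsub x y)). pose proof (neg_abs (dot n g (vsub x y))).
  rewrite norm_sub_sym.
  assert (norm n g * norm n (vsub x y) <= C * norm n (vsub x y)).
  { apply Rmult_le_compat_r. apply norm_nonneg. auto. }
  lra.
Qed.

Lemma incr_ge (phi : nat -> nat) : (forall k, (phi k < phi (S k))%nat) -> forall k, (k <= phi k)%nat.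
Proof. intros H; induction k; [lia|]. specialize (H k). lia. Qed.

Lemma cv_const c : Un_cv (fun _ => c) c.
Proof. intros e He. exists 0%nat. intros. unfold R_dist. rewrite Rminus_diag, Rabs_R0. auto. Qed.

Lemma le_lim0 c s : (forall j, c <= s j) -> Un_cv s 0 -> c <= 0.
Proof.
  intros H Hs. destruct (Rle_or_lt c 0) as [|Hc]; auto.
  destruct (Hs c Hc) as [N HN]. specialize (HN N (le_n _)). unfold R_dist in HN.
  rewrite Rminus_0_r in HN. pose proof (Rle_abs (s N)). pose proof (H N). lra.
Qed.

Theorem lemma1
  (n m : nat) (X : vec -> Prop) (fs : nat -> vec -> R) (h : vec -> R)
  (mu_h C_f C_h : R) (xh : vec) (lam : nat -> R) (xl : nat -> vec)
  (HXn : forall x, X x -> inRn n x)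
  (HXne : exists x, X x)
  (HXc : seq_compact n X)
  (HXcv : convex_set n X)
  (Hfs : forall i, (i < m)%nat -> convex_fun n (fs i))
  (Hmu : 0 < mu_h)
  (Hh : strongly_convex n h mu_h)
  (HCf : forall i x g, (i < m)%nat -> X x -> subgrad n (fs i) x g -> norm n g <= C_f)
  (HCh : forall x g, X x -> subgrad n h x g -> norm n g <= C_h)
  (Hxh : is_min_on h (argmin_set (sumfun m fs) X) xh)
  (Hlam : forall k, 0 < lam k)
  (Hxl : forall k, is_min_on (fun x => sumfun m fs x + lam k * h x) X (xl k)) :
  (forall k, (1 <= k)%nat ->
     norm n (vsub (xl k) (xl (k - 1)%nat))
       <= C_h / mu_h * Rabs (1 - lam (k - 1)%nat / lam k)) /\
  (Un_cv lam 0 -> Un_cv (fun k => norm n (vsub (xl k) xh)) 0).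
Proof.
  assert (Hfc : convex_fun n (sumfun m fs)) by (apply sumfun_convex; auto).
  set (f := sumfun m fs) in *.
  assert (Hhc : convex_fun n h) by (destruct Hh; auto).
  split.
  - intros k Hk.
    set (a := xl k). set (b := xl (k-1)%nat). set (l1 := lam k). set (l0 := lam (k-1)%nat).
    destruct (Hxl k) as [HXa Hopa]. destruct (Hxl (k-1)%nat) as [HXb Hopb].
    fold a l1 in HXa, Hopa. fold b l0 in HXb, Hopb.
    assert (Hl1 : 0 < l1) by apply Hlam. assert (Hl0 : 0 < l0) by apply Hlam.
    set (D := norm n (vsub a b)). set (D2 := dot n (vsub a b) (vsub a b)).
    assert (HD : D * D = D2) by apply norm_sq.
    assert (HD0 : 0 <= D) by apply norm_nonneg.
    assert (HCh0 : 0 <= C_h).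
    { destruct (subgrad_exists n h a Hhc (HXn a HXa)) as [g Hg].
      pose proof (HCh a g HXa Hg). pose proof (norm_nonneg n g). lra. }
    set (K := Rabs (l0 - l1) * C_h * D).
    assert (HK : 0 <= K) by (unfold K; apply Rmult_le_pos; [apply Rmult_le_pos; auto; apply Rabs_pos|auto]).
    assert (Main : forall t, 0 < t <= 1 -> l1 * mu_h * (1-t) * D2 <= K).
    { intros t Ht.
      assert (Ht' : 0 <= t <= 1) by lra.
      set (At := vadd (vscal t b) (vscal (1-t) a)). set (Bt := vadd (vscal t a) (vscal (1-t) b)).
      assert (HXAt : X At) by (apply HXcv; auto).
      assert (HXBt : X Bt) by (apply HXcv; auto).
      assert (H1 := Hopa At HXAt). assert (H2 := Hopb Bt HXBt). cbv beta in H1, H2.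
      assert (H3 := Hfc b a t (HXn _ HXb) (HXn _ HXa) Ht'). fold At in H3.
      assert (H4 := Hfc a b t (HXn _ HXa) (HXn _ HXb) Ht'). fold Bt in H4.
      assert (H5 := seg_sc n h mu_h b a t Hh (HXn _ HXb) (HXn _ HXa) Ht'). fold At in H5.
      assert (H6 := seg_sc n h mu_h a b t Hh (HXn _ HXa) (HXn _ HXb) Ht'). fold Bt in H6.
      replace (dot n (vsub b a) (vsub b a)) with D2 in H5 by (unfold D2; lin).
      fold D2 in H6.
      assert (H7 := lip n h C_h X b Bt Hhc HCh HXn HXb HXBt).
      assert (H8 := lip n h C_h X Bt b Hhc HCh HXn HXBt HXb).
      assert (EN : norm n (vsub Bt b) = t * D).
      { replace (vsub Bt b) with (vscal t (vsub a b)).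
        rewrite norm_scal, Rabs_pos_eq; auto; lra.
        apply functional_extensionality; intro i; unfold Bt, vsub, vadd, vscal; ring. }
      rewrite EN in H7. rewrite norm_sub_sym, EN in H8.
      set (hA := h At) in *. set (hB := h Bt) in *. set (ha := h a) in *. set (hb := h b) in *.
      assert (S1 : l1 * (hA - ha) + l0 * (hB - hb) >= 0).
      { set (fA := f At) in *. set (fB := f Bt) in *. set (fa := f a) in *. set (fb := f b) in *.
        assert (fA - fa + (fB - fb) <= 0) by nra. nra. }
      assert (S2 : (hA - ha) + (hB - hb) <= - (mu_h * (t * (1-t)) * D2)) by nra.
      assert (S3 : (l0 - l1) * (hB - hb) <= Rabs (l0 - l1) * (C_h * (t * D))).
      { destruct (Rle_or_lt 0 (l0 - l1)).
        - rewrite Rabs_pos_eq by auto. apply Rmult_le_compat_l; auto.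
        - rewrite Rabs_left by auto. replace ((l0 - l1) * (hB - hb)) with (-(l0-l1) * (hb - hB)) by ring.
          apply Rmult_le_compat_l; lra. }
      assert (S4 : l1 * (hA - ha) + l0 * (hB - hb) = l1 * ((hA - ha) + (hB - hb)) + (l0 - l1) * (hB - hb)) by ring.
      assert (S5 : l1 * ((hA - ha) + (hB - hb)) <= l1 * (- (mu_h * (t * (1-t)) * D2))).
      { apply Rmult_le_compat_l; lra. }
      assert (S6 : t * (l1 * mu_h * (1-t) * D2) <= t * K).
      { unfold K. nra. }
      apply Rmult_le_reg_l in S6; lra. }
    assert (Lim : l1 * mu_h * D2 <= K).
    { destruct (Rle_or_lt (l1 * mu_h * D2) K) as [|HP]; auto. exfalso.
      set (P := l1 * mu_h * D2) in *.
      set (t := (P - K) / (2 * P)).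
      assert (HP0 : 0 < P) by lra.
      assert (Ht : 0 < t <= 1).
      { unfold t. split. apply Rdiv_lt_0_compat; lra.
        apply Rmult_le_reg_r with (2*P). lra. field_simplify; lra. }
      specialize (Main t Ht).
      replace (l1 * mu_h * (1 - t) * D2) with (P - t * P) in Main by (unfold P; ring).
      replace (t * P) with ((P - K)/2) in Main by (unfold t; field; lra). lra. }
    replace (1 - l0 / l1) with ((l1 - l0) * / l1) by (field; lra).
    rewrite Rabs_mult, Rabs_inv, (Rabs_pos_eq l1) by lra. rewrite Rabs_minus_sym.
    fold D.
    destruct (Req_dec D 0) as [HD1|HD1].
    + rewrite HD1. apply Rmult_le_pos. apply Rmult_le_pos; auto. left; apply Rinv_0_lt_compat; auto.
      apply Rmult_le_pos. apply Rabs_pos. left; apply Rinv_0_lt_compat; auto.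
    + assert (HDp : 0 < D) by lra.
      assert (l1 * mu_h * D <= Rabs (l0 - l1) * C_h).
      { unfold K in Lim. rewrite <- HD in Lim. nra. }
      replace (C_h / mu_h * (Rabs (l0 - l1) * / l1)) with ((Rabs (l0 - l1) * C_h) / (l1 * mu_h)) by (field; lra).
      apply Rmult_le_reg_l with (l1 * mu_h). nra.
      replace (l1 * mu_h * (Rabs (l0 - l1) * C_h / (l1 * mu_h))) with (Rabs (l0 - l1) * C_h) by (field; lra).
      lra.
  - intros Hl.
    destruct Hxh as [[HXxh Hfxh] Hhxh].
    assert (Hfk : forall k, f (xl k) - f xh <= lam k * (h xh - h (xl k))).
    { intro k. destruct (Hxl k) as [HXk Hk]. specialize (Hk xh HXxh). cbv beta in Hk. lra. }
    assert (Hhk : forall k, h (xl k) <= h xh).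
    { intro k. pose proof (Hfk k). destruct (Hxl k) as [HXk _]. pose proof (Hfxh _ HXk).
      pose proof (Hlam k). nra. }
    apply NNPP; intro Hnot.
    assert (Heps : exists eps, eps > 0 /\ forall N, exists k, (k >= N)%nat /\ norm n (vsub (xl k) xh) >= eps).
    { unfold Un_cv in Hnot. apply not_all_ex_not in Hnot. destruct Hnot as [eps Heps].
      exists eps. apply imply_to_and in Heps. destruct Heps as [He Hn]. split; auto.
      intro N. apply not_ex_all_not with (n:=N) in Hn. apply not_all_ex_not in Hn. destruct Hn as [k Hk].
      apply imply_to_and in Hk. destruct Hk as [Hk1 Hk2]. exists k. split; auto.
      unfold R_dist in Hk2. rewrite Rminus_0_r, Rabs_pos_eq in Hk2 by apply norm_nonneg. lra. }
    destruct Heps as [eps [He HN]].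
    set (kap := fun N => proj1_sig (constructive_indefinite_description _ (HN N))).
    assert (Hkap : forall N, (kap N >= N)%nat /\ norm n (vsub (xl (kap N)) xh) >= eps).
    { intro N. unfold kap. destruct (constructive_indefinite_description _ (HN N)) as [k Hk]. simpl. auto. }
    destruct (HXc (fun j => xl (kap j))) as [phi [l [Hphi [HXl Hcv]]]].
    { intro j. apply (Hxl (kap j)). }
    set (y := fun j => xl (kap (phi j))). set (r := fun j => norm n (vsub (y j) l)).
    assert (Hr : Un_cv r 0) by exact Hcv.
    assert (Hge : forall j, (j <= kap (phi j))%nat).
    { intro j. pose proof (incr_ge phi Hphi j). pose proof (proj1 (Hkap (phi j))). lia. }
    assert (Hmuj : Un_cv (fun j => lam (kap (phi j))) 0).
    { intros e He'. destruct (Hl e He') as [N HN']. exists N. intros j Hj. apply HN'. pose proof (Hge j). lia. }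
    assert (HXy : forall j, X (y j)) by (intro j; apply (Hxl (kap (phi j)))).
    destruct (lsc n f l Hfc (HXn l HXl)) as [Gf [HGf Hf_l]].
    destruct (lsc n h l Hhc (HXn l HXl)) as [Gh [HGh Hh_l]].
    assert (Hs : forall j, f l - f xh <= lam (kap (phi j)) * (h xh - h l + Gh * r j) + Gf * r j).
    { intro j. pose proof (Hf_l (y j) (HXn _ (HXy j))). pose proof (Hh_l (y j) (HXn _ (HXy j))).
      pose proof (Hfk (kap (phi j))). pose proof (Hlam (kap (phi j))). fold (y j) in *. fold (r j) in *.
      assert (lam (kap (phi j)) * (h xh - h (y j)) <= lam (kap (phi j)) * (h xh - h l + Gh * r j)).
      { apply Rmult_le_compat_l; lra. }
      lra. }
    assert (Hscv : Un_cv (fun j => lam (kap (phi j)) * (h xh - h l + Gh * r j) + Gf * r j) 0).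
    { replace 0 with (0 * (h xh - h l + Gh * 0) + Gf * 0) by ring.
      apply (CV_plus (fun j => lam (kap (phi j)) * (h xh - h l + Gh * r j)) (fun j => Gf * r j)).
      apply (CV_mult (fun j => lam (kap (phi j))) (fun j => h xh - h l + Gh * r j)); auto.
      apply (CV_plus (fun _ => h xh - h l) (fun j => Gh * r j)). apply cv_const.
      apply (CV_mult (fun _ => Gh) r); auto. apply cv_const.
      apply (CV_mult (fun _ => Gf) r); auto. apply cv_const. }
    assert (Hfl : f l - f xh <= 0) by exact (le_lim0 _ _ Hs Hscv).
    assert (Hhl : h l - h xh <= 0).
    { apply (le_lim0 _ (fun j => Gh * r j)).
      intro j. pose proof (Hh_l (y j) (HXn _ (HXy j))). pose proof (Hhk (kap (phi j))). fold (y j) in *. fold (r j) in *. lra.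
      replace 0 with (Gh * 0) by ring. apply (CV_mult (fun _ => Gh) r); auto. apply cv_const. }
    assert (Hlmin : argmin_set f X l).
    { split; auto. intros z Hz. pose proof (Hfxh z Hz). lra. }
    pose proof (Hhxh l Hlmin).
    set (mm := vadd (vscal (1/2) l) (vscal (1 - 1/2) xh)).
    assert (HXm : X mm) by (apply HXcv; auto; lra).
    assert (Hfm := Hfc l xh (1/2) (HXn _ HXl) (HXn _ HXxh) ltac:(lra)). fold mm in Hfm.
    assert (Hmmin : argmin_set f X mm).
    { split; auto. intros z Hz. pose proof (Hfxh z Hz). lra. }
    pose proof (Hhxh mm Hmmin).
    assert (Hsm := seg_sc n h mu_h l xh (1/2) Hh (HXn _ HXl) (HXn _ HXxh) ltac:(lra)). fold mm in Hsm.
    pose proof (dot_nonneg n (vsub l xh)).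
    assert (HD0 : dot n (vsub l xh) (vsub l xh) = 0) by nra.
    assert (Hcomp := dot_zero_comp n _ HD0).
    assert (Heq : forall j, norm n (vsub (y j) xh) = r j).
    { intro j. unfold r, norm. f_equal. apply dot_ext; intros i Hi; unfold vsub;
      specialize (Hcomp i Hi); unfold vsub in Hcomp; lra. }
    destruct (Hr eps He) as [N HN2]. specialize (HN2 N (le_n _)).
    unfold R_dist in HN2. rewrite Rminus_0_r, Rabs_pos_eq in HN2 by apply norm_nonneg.
    pose proof (proj2 (Hkap (phi N))). fold (y N) in H2. rewrite Heq in H2. lra.
Qed.
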